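(* Every filter $\mathcal{F}$ on $\omega$ (viewed as a subspace of $2^\omega$) is strongly homogeneous.
   Context: A filter on $\omega$ is $\mathcal{F}\subseteq\mathcal{P}(\omega)$ with $\varnothing\notin\mathcal{F}$, $\omega\in\mathcal{F}$, closed under finite modifications (if $x\in\mathcal{F}$ and $y$ differs from $x$ by a finite set then $y\in\mathcal{F}$), upward-closed, and closed under finite intersections; it is identified via characteristic functions with a subspace of $2^\omega$. A space $X$ is strongly homogeneous if every non-empty clopen subspace of $X$ is homeomorphic to $X$. *)

(* Defs.v *)
(* Cantor space 2^omega is represented as nat -> bool,
   subspaces as predicates on nat -> bool. *)

Definition cantor := nat -> bool.

Definition agree (n : nat) (x y : cantor) : Prop :=
  forall k, k < n -> x k = y k.

Definition fin_diff (x y : cantor) : Prop :=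
  exists N, forall n, N <= n -> x n = y n.

(* A filter on omega, identified via characteristic functions. *)
Definition is_filter (F : cantor -> Prop) : Prop :=
  ~ F (fun _ => false) /\
  F (fun _ => true) /\
  (forall x y, F x -> fin_diff x y -> F y) /\
  (forall x y, F x -> (forall n, x n = true -> y n = true) -> F y) /\
  (forall x y, F x -> F y -> F (fun n => andb (x n) (y n))).

Definition subset (A B : cantor -> Prop) : Prop := forall x, A x -> B x.

Definition open_in (X U : cantor -> Prop) : Prop :=
  forall x, U x -> exists n, forall y, X y -> agree n x y -> U y.

Definition clopen_in (X U : cantor -> Prop) : Prop :=
  subset U X /\ open_in X U /\ open_in X (fun y => X y /\ ~ U y).

Definition continuous_on (A : cantor -> Prop) (f : cantor -> cantor) : Prop :=
  forall x, A x -> forall m, exists n, forall y, A y -> agree n x y ->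
    agree m (f x) (f y).

Definition homeomorphic (A B : cantor -> Prop) : Prop :=
  exists (f g : cantor -> cantor),
    (forall x, A x -> B (f x)) /\
    (forall y, B y -> A (g y)) /\
    (forall x, A x -> forall n, g (f x) n = x n) /\
    (forall y, B y -> forall n, f (g y) n = y n) /\
    continuous_on A f /\ continuous_on B g.

Definition strongly_homogeneous (X : cantor -> Prop) : Prop :=
  forall U, clopen_in X U -> (exists x, U x) -> homeomorphic U X.

(* Main.v *)
Require Import Defs.
From Stdlib Require Import Arith Lia Classical ClassicalEpsilon FunctionalExtensionality.

Definition homeo (A B : cantor -> Prop) (f g : cantor -> cantor) : Prop :=
    (forall x, A x -> B (f x)) /\
    (forall y, B y -> A (g y)) /\
    (forall x, A x -> forall n, g (f x) n = x n) /\
    (forall y, B y -> forall n, f (g y) n = y n) /\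
    continuous_on A f /\ continuous_on B g.

Lemma homeo_sym A B f g : homeo A B f g -> homeo B A g f.
Proof. intros (H1&H2&H3&H4&H5&H6). exact (conj H2 (conj H1 (conj H4 (conj H3 (conj H6 H5))))). Qed.

Lemma hsym A B : homeomorphic A B -> homeomorphic B A.
Proof. intros (f&g&H). exists g, f. exact (homeo_sym _ _ _ _ H). Qed.

Lemma cont_comp A B f g : (forall x, A x -> B (f x)) -> continuous_on A f ->
  continuous_on B g -> continuous_on A (fun x => g (f x)).
Proof.
  intros Hm Hf Hg x Hx m.
  destruct (Hg (f x) (Hm x Hx) m) as [n1 Hn1].
  destruct (Hf x Hx n1) as [n2 Hn2].
  exists n2. intros y Hy Hxy. apply Hn1; auto.
Qed.

Lemma cont_sub A B f : continuous_on A f -> (forall x, B x -> A x) -> continuous_on B f.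
Proof.
  intros H Hs x Hx m. destruct (H x (Hs x Hx) m) as [n Hn]. exists n. intros; auto.
Qed.

Lemma htrans A B C : homeomorphic A B -> homeomorphic B C -> homeomorphic A C.
Proof.
  intros (f1&g1&H11&H12&H13&H14&H15&H16) (f2&g2&H21&H22&H23&H24&H25&H26).
  exists (fun x => f2 (f1 x)), (fun y => g1 (g2 y)).
  repeat split.
  - auto.
  - auto.
  - intros x Hx n.
    assert (E : g2 (f2 (f1 x)) = f1 x) by (apply functional_extensionality; auto).
    rewrite E; auto.
  - intros y Hy n.
    assert (E : f1 (g1 (g2 y)) = g2 y) by (apply functional_extensionality; auto).
    rewrite E; auto.
  - apply (cont_comp A B); auto.
  - apply (cont_comp C B); auto.
Qed.

Lemma homeo_restr X Y Z f g : homeo X Y f g -> (forall x, Z x -> X x) ->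
  homeo Z (fun y => Y y /\ Z (g y)) f g.
Proof.
  intros (H1&H2&H3&H4&H5&H6) HZ.
  split; [|split; [|split; [|split; [|split]]]].
  - intros x Hx. split; auto.
    assert (E : g (f x) = x) by (apply functional_extensionality; auto).
    rewrite E; auto.
  - intros y [_ Hy]; auto.
  - auto.
  - intros y [Hy _]; auto.
  - apply (cont_sub X); auto.
  - apply (cont_sub Y); auto. intros y [Hy _]; auto.
Qed.

Lemma agree_le n m x y : agree n x y -> m <= n -> agree m x y.
Proof. intros H Hm k Hk. apply H. lia. Qed.

Lemma agree_sym n x y : agree n x y -> agree n y x.
Proof. intros H k Hk. symmetry. auto. Qed.

Lemma open_pre X Y f g Q : homeo X Y f g -> open_in X Q ->
  open_in Y (fun y => Y y /\ Q (g y)).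
Proof.
  intros (H1&H2&H3&H4&H5&H6) HQ y [Hy Hq].
  destruct (HQ _ Hq) as [n1 Hn1].
  destruct (H6 y Hy n1) as [n2 Hn2].
  exists n2. intros z Hz Hyz. split; [auto|]. apply Hn1; auto.
Qed.

Lemma open_trans X Y S : open_in X Y -> (forall x, Y x -> X x) ->
  (forall x, S x -> Y x) -> open_in Y S -> open_in X S.
Proof.
  intros HY HYX HSY HS x Hx.
  destruct (HS x Hx) as [n1 Hn1].
  destruct (HY x (HSY x Hx)) as [n2 Hn2].
  exists (max n1 n2). intros y Hy Hxy.
  apply Hn1.
  - apply Hn2; auto. apply (agree_le (max n1 n2)); auto; lia.
  - apply (agree_le (max n1 n2)); auto; lia.
Qed.

Lemma homeo_choice (I : Type) (X Y : I -> cantor -> Prop) :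
  (forall i, homeomorphic (X i) (Y i)) ->
  exists (f g : I -> cantor -> cantor), forall i, homeo (X i) (Y i) (f i) (g i).
Proof.
  intros H.
  assert (HF: forall i, {f : cantor -> cantor | exists g, homeo (X i) (Y i) f g}).
  { intro i. apply constructive_indefinite_description. exact (H i). }
  assert (HG: forall i, {g | homeo (X i) (Y i) (proj1_sig (HF i)) g}).
  { intro i. apply constructive_indefinite_description. exact (proj2_sig (HF i)). }
  exists (fun i => proj1_sig (HF i)), (fun i => proj1_sig (HG i)).
  intro i. exact (proj2_sig (HG i)).
Qed.

Lemma glue (I : Type) (i0 : I) (X Y : cantor -> Prop) (PX PY : I -> cantor -> Prop) :
  (forall i x, PX i x -> X x) -> (forall x, X x -> exists i, PX i x) ->
  (forall i j x, PX i x -> PX j x -> i = j) ->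
  (forall i, open_in X (PX i)) ->
  (forall i y, PY i y -> Y y) -> (forall y, Y y -> exists i, PY i y) ->
  (forall i j y, PY i y -> PY j y -> i = j) ->
  (forall i, open_in Y (PY i)) ->
  (forall i, homeomorphic (PX i) (PY i)) -> homeomorphic X Y.
Proof.
  intros sX cX dX oX sY cY dY oY H.
  destruct (homeo_choice I PX PY H) as (fX & gY & Hh).
  set (ix := fun x => epsilon (inhabits i0) (fun i => PX i x)).
  set (iy := fun y => epsilon (inhabits i0) (fun i => PY i y)).
  assert (Hix : forall x, X x -> PX (ix x) x).
  { intros x Hx. unfold ix. apply epsilon_spec. auto. }
  assert (Hiy : forall y, Y y -> PY (iy y) y).
  { intros y Hy. unfold iy. apply epsilon_spec. auto. }
  assert (Hix' : forall i x, PX i x -> ix x = i).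
  { intros i x Hx. apply (dX _ _ x); auto. apply Hix. eauto. }
  assert (Hiy' : forall i y, PY i y -> iy y = i).
  { intros i y Hy. apply (dY _ _ y); auto. apply Hiy. eauto. }
  exists (fun x => fX (ix x) x), (fun y => gY (iy y) y).
  repeat split.
  - intros x Hx. destruct (Hh (ix x)) as (H1&_). eauto.
  - intros y Hy. destruct (Hh (iy y)) as (_&H2&_). eauto.
  - intros x Hx n. pose proof (Hix x Hx) as Hp.
    destruct (Hh (ix x)) as (H1&H2&H3&_).
    rewrite (Hiy' (ix x)); auto.
  - intros y Hy n. pose proof (Hiy y Hy) as Hp.
    destruct (Hh (iy y)) as (H1&H2&H3&H4&_).
    rewrite (Hix' (iy y)); auto.
  - intros x Hx m. pose proof (Hix x Hx) as Hp.
    destruct (oX (ix x) x Hp) as [n1 Hn1].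
    destruct (Hh (ix x)) as (_&_&_&_&H5&_).
    destruct (H5 x Hp m) as [n2 Hn2].
    exists (max n1 n2). intros y Hy Hxy.
    assert (Hpy : PX (ix x) y) by (apply Hn1; auto; apply (agree_le (max n1 n2)); auto; lia).
    rewrite (Hix' _ _ Hpy). apply Hn2; auto. apply (agree_le (max n1 n2)); auto; lia.
  - intros x Hx m. pose proof (Hiy x Hx) as Hp.
    destruct (oY (iy x) x Hp) as [n1 Hn1].
    destruct (Hh (iy x)) as (_&_&_&_&_&H5).
    destruct (H5 x Hp m) as [n2 Hn2].
    exists (max n1 n2). intros y Hy Hxy.
    assert (Hpy : PY (iy x) y) by (apply Hn1; auto; apply (agree_le (max n1 n2)); auto; lia).
    rewrite (Hiy' _ _ Hpy). apply Hn2; auto. apply (agree_le (max n1 n2)); auto; lia.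
Qed.

Definition pref (n : nat) (s : cantor) (x : cantor) : Prop := forall i, i < n -> x i = s i.
Definition Cyl (F : cantor -> Prop) n s : cantor -> Prop := fun x => F x /\ pref n s x.

Lemma pref_agree n s x y : agree n x y -> pref n s x -> pref n s y.
Proof. intros H Hp i Hi. rewrite <- H; auto. Qed.

Lemma cyl_open F n s : open_in F (Cyl F n s).
Proof.
  intros x [Hx Hp]. exists n. intros y Hy Hxy. split; auto. eapply pref_agree; eauto.
Qed.

Definition repl (n : nat) (s : cantor) (x : cantor) : cantor :=
  fun i => if i <? n then s i else x i.

Lemma repl_homeo F n s t : is_filter F ->
  homeo (Cyl F n t) (Cyl F n s) (repl n s) (repl n t).
Proof.
  intros (Hnz&Ht&Hfin&Hup&Hm).
  assert (HC : forall u v x, Cyl F n u x -> Cyl F n v (repl n v x)).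
  { intros u v x [Hx Hp]. split.
    - apply (Hfin x). auto. exists n. intros i Hi. unfold repl.
      destruct (Nat.ltb_spec i n); auto; lia.
    - intros i Hi. unfold repl. destruct (Nat.ltb_spec i n); auto; lia. }
  assert (HI : forall u v x, Cyl F n u x -> forall i, repl n u (repl n v x) i = x i).
  { intros u v x [Hx Hp] i. unfold repl. destruct (Nat.ltb_spec i n); auto.
    symmetry; auto. }
  assert (Hc : forall u, continuous_on (Cyl F n u) (repl n s) /\ continuous_on (Cyl F n u) (repl n t)).
  { intros u; split; intros x Hx m; exists m; intros y Hy Hxy i Hi; unfold repl;
    destruct (i <? n); auto. }
  split; [|split; [|split; [|split; [|split]]]]; try (intros; eapply HC; eauto);
  try (intros; eapply HI; eauto); apply Hc.
Qed.

Definition idx (e : nat -> nat) (n : nat) : option nat :=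
  match excluded_middle_informative (exists j, e j = n) with
  | left H => Some (proj1_sig (constructive_indefinite_description _ H))
  | right _ => None end.

Lemma idx_cases e n : (exists j, idx e n = Some j /\ e j = n) \/ (idx e n = None /\ forall j, e j <> n).
Proof.
  unfold idx. destruct (excluded_middle_informative _) as [H|H].
  - left. destruct (constructive_indefinite_description _ H) as [j Hj]. simpl. eauto.
  - right. split; auto. intros j Hj. apply H. eauto.
Qed.

Lemma mono e : (forall j, e j < e (S j)) -> forall a b, a < b -> e a < e b.
Proof.
  intros He a b Hab. induction Hab. apply He. specialize (He m). lia.
Qed.

Lemma mono_le e : (forall j, e j < e (S j)) -> forall a b, a <= b -> e a <= e b.
Proof.
  intros He a b Hab. destruct (Nat.eq_dec a b). subst; lia.
  assert (e a < e b) by (apply mono; auto; lia). lia.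
Qed.

Lemma e_ge e : (forall j, e j < e (S j)) -> forall j, j <= e j.
Proof. intros He j. induction j. lia. specialize (He j). lia. Qed.

Lemma idx_e e j : (forall j, e j < e (S j)) -> idx e (e j) = Some j.
Proof.
  intros He. destruct (idx_cases e (e j)) as [(k&Hk&Hek)|(_&H)].
  - rewrite Hk. f_equal.
    destruct (Nat.lt_trichotomy k j) as [h|[h|h]]; auto;
    apply (mono e He) in h; lia.
  - exfalso. apply (H j). auto.
Qed.

Definition sig_ (e : nat -> nat) (m : nat) (x : cantor) : cantor :=
  fun n => match idx e n with Some j => if j <? m then false else x (e (j - m)) | None => x n end.
Definition rho_ (e : nat -> nat) (m : nat) (y : cantor) : cantor :=
  fun n => match idx e n with Some j => y (e (j + m)) | None => y n end.

Lemma shift_homeo F m e : (forall j, e j < e (S j)) -> (forall j, j < m -> e j = j) ->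
  (forall x, F x -> F (sig_ e m x)) -> (forall y, F y -> F (rho_ e m y)) ->
  homeo F (Cyl F m (fun _ => false)) (sig_ e m) (rho_ e m).
Proof.
  intros He Hid Hs Hr.
  split; [|split; [|split; [|split; [|split]]]].
  - intros x Hx. split; auto. intros i Hi. unfold sig_.
    rewrite <- (Hid i Hi) at 1. rewrite idx_e; auto.
    destruct (Nat.ltb_spec i m); auto; lia.
  - intros y [Hy _]. auto.
  - intros x Hx n. unfold rho_.
    destruct (idx_cases e n) as [(j&Hj&Hej)|(Hj&_)]; rewrite Hj.
    + unfold sig_. rewrite idx_e; auto.
      destruct (Nat.ltb_spec (j+m) m); [lia|].
      replace (j + m - m) with j by lia. rewrite Hej. auto.
    + unfold sig_. rewrite Hj. auto.
  - intros y [Hy Hp] n. unfold sig_.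
    destruct (idx_cases e n) as [(j&Hj&Hej)|(Hj&_)]; rewrite Hj.
    + destruct (Nat.ltb_spec j m).
      * rewrite Hid in Hej; auto. subst. rewrite Hp; auto.
      * unfold rho_. rewrite idx_e; auto.
        replace (j - m + m) with j by lia. rewrite Hej. auto.
    + unfold rho_. rewrite Hj. auto.
  - intros x Hx m'. exists m'. intros y Hy Hxy i Hi. unfold sig_.
    destruct (idx_cases e i) as [(j&Hj&Hej)|(Hj&_)]; rewrite Hj.
    + destruct (j <? m); auto. apply Hxy.
      assert (e (j - m) <= e j) by (apply mono_le; auto; lia). lia.
    + apply Hxy; auto.
  - intros x Hx m'. exists (S (e (m' + m))). intros y Hy Hxy i Hi. unfold rho_.
    pose proof (e_ge e He (m' + m)).
    destruct (idx_cases e i) as [(j&Hj&Hej)|(Hj&_)]; rewrite Hj.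
    + apply Hxy. pose proof (e_ge e He j).
      assert (e (j + m) < e (m' + m)) by (apply mono; auto; lia). lia.
    + apply Hxy. lia.
Qed.

Lemma F_agree F A x y : is_filter F -> F A -> F x ->
  (forall n, A n = true -> x n = y n) -> F y.
Proof.
  intros (Hnz&Ht&Hfin&Hup&Hm) HA Hx H.
  apply (Hup (fun n => andb (x n) (A n))). apply Hm; auto.
  intros n Hn. apply andb_prop in Hn as [H1 H2]. rewrite <- H; auto.
Qed.

Lemma K0 F m : is_filter F -> homeomorphic F (Cyl F m (fun _ => false)).
Proof.
  intros HF. pose proof HF as (Hnz&Ht&Hfin&Hup&Hm).
  destruct (classic (exists A, F A /\ forall N, exists n, N <= n /\ A n = false)) as [(A&HA&Hinf)|Hno].
  - assert (Hn : forall N, {n | N <= n /\ A n = false}).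
    { intro N. apply constructive_indefinite_description. auto. }
    set (nxt := fun N => proj1_sig (Hn N)).
    assert (Hnxt : forall N, N <= nxt N /\ A (nxt N) = false) by (intro N; exact (proj2_sig (Hn N))).
    set (e := fix e j := match j with 0 => if 0 <? m then 0 else nxt 0
                          | S j' => if S j' <? m then S j' else nxt (S (e j')) end).
    assert (Hid : forall j, j < m -> e j = j).
    { intros j Hj. destruct j; simpl; [destruct (Nat.ltb_spec 0 m) | destruct (Nat.ltb_spec (S j) m)]; auto; lia. }
    assert (He : forall j, e j < e (S j)).
    { intro j. simpl. destruct (Nat.ltb_spec (S j) m).
      - rewrite Hid by lia. lia.
      - specialize (Hnxt (S (e j))). lia. }
    assert (Hout : forall j, m <= j -> A (e j) = false).
    { intros j Hj. destruct j; simpl; [destruct (Nat.ltb_spec 0 m) | destruct (Nat.ltb_spec (S j) m)]; try lia; apply Hnxt. }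
    set (A' := fun n => andb (m <=? n) (A n)).
    assert (HA' : F A').
    { apply (Hfin A); auto. exists m. intros n Hn'. unfold A'.
      destruct (Nat.leb_spec m n); auto; lia. }
    assert (HoffE : forall n, A' n = true -> forall j, e j <> n).
    { intros n Hn' j Hj. unfold A' in Hn'. apply andb_prop in Hn' as [H1 H2].
      apply Nat.leb_le in H1. subst n.
      destruct (Nat.ltb_spec j m).
      - rewrite Hid in H1; auto. lia.
      - rewrite Hout in H2; auto. discriminate. }
    exists (sig_ e m), (rho_ e m). apply shift_homeo; auto.
    + intros x Hx. apply (F_agree F A' x); auto. intros n Hn'.
      unfold sig_. destruct (idx_cases e n) as [(j&Hj&Hej)|(Hj&_)].
      * exfalso. eapply HoffE; eauto.
      * rewrite Hj; auto.
    + intros x Hx. apply (F_agree F A' x); auto. intros n Hn'.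
      unfold rho_. destruct (idx_cases e n) as [(j&Hj&Hej)|(Hj&_)].
      * exfalso. eapply HoffE; eauto.
      * rewrite Hj; auto.
  - assert (Hcof : forall x, F x -> exists N, forall n, N <= n -> x n = true).
    { intros x Hx. apply NNPP. intro Hc. apply Hno. exists x. split; auto.
      intro N. apply NNPP. intro Hc2. apply Hc. exists N. intros n Hn.
      destruct (x n) eqn:E; auto. exfalso. apply Hc2. eauto. }
    exists (sig_ (fun j => j) m), (rho_ (fun j => j) m). apply shift_homeo; auto.
    + intros x Hx. destruct (Hcof x Hx) as [N HN].
      apply (Hfin (fun _ => true)); auto. exists (N + m). intros n Hn.
      unfold sig_. rewrite (idx_e (fun j => j) n) by auto.
      destruct (Nat.ltb_spec n m); [lia|]. rewrite HN; auto. lia.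
    + intros x Hx. destruct (Hcof x Hx) as [N HN].
      apply (Hfin (fun _ => true)); auto. exists N. intros n Hn.
      unfold rho_. rewrite (idx_e (fun j => j) n) by auto. rewrite HN; auto. lia.
Qed.

Lemma K F n s : is_filter F -> homeomorphic F (Cyl F n s).
Proof.
  intros HF. apply (htrans _ (Cyl F n (fun _ => false))). apply K0; auto.
  exists (repl n s), (repl n (fun _ => false)). apply repl_homeo; auto.
Qed.

Lemma least (p : nat -> bool) : (exists k, p k = true) ->
  exists k, p k = true /\ forall j, j < k -> p j = false.
Proof.
  intros [k Hk].
  assert (G : forall N, (exists k, k <= N /\ p k = true) ->
     exists k, p k = true /\ forall j, j < k -> p j = false).
  { induction N; intros (k0&Hk0&Hp).
    - exists 0. split. replace 0 with k0 by lia. auto. intros; lia.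
    - destruct (classic (exists k, k <= N /\ p k = true)) as [Hc|Hc]; auto.
      exists k0. split; auto. intros j Hj. destruct (p j) eqn:E; auto.
      exfalso. apply Hc. exists j. split; auto. lia. }
  apply (G k). eauto.
Qed.

Definition P (F : cantor -> Prop) (k : nat) := Cyl F (S k) (fun i => i =? k).

Lemma P_disj F k j y : P F k y -> P F j y -> k = j.
Proof.
  intros [_ H1] [_ H2]. unfold pref in *.
  destruct (Nat.lt_trichotomy k j) as [h|[h|h]]; auto; exfalso.
  - assert (A1 := H1 k ltac:(lia)). assert (A2 := H2 k ltac:(lia)). cbn beta in *.
    rewrite A1 in A2. rewrite Nat.eqb_refl in A2. symmetry in A2. apply Nat.eqb_eq in A2; lia.
  - assert (A1 := H1 j ltac:(lia)). assert (A2 := H2 j ltac:(lia)). cbn beta in *.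
    rewrite A2 in A1. rewrite Nat.eqb_refl in A1. symmetry in A1. apply Nat.eqb_eq in A1; lia.
Qed.

Lemma P_cover F y : is_filter F -> F y -> exists k, P F k y.
Proof.
  intros (Hnz&Ht&Hfin&Hup&Hm) Hy.
  destruct (least y) as (k&Hk&Hl).
  { apply NNPP. intro Hc. apply Hnz. apply (Hfin y); auto. exists 0. intros n _.
    destruct (y n) eqn:E; auto. exfalso. apply Hc. eauto. }
  exists k. split; auto. intros i Hi.
  destruct (Nat.eqb_spec i k). subst; auto. apply Hl. lia.
Qed.

Theorem proposition13p3 (F : cantor -> Prop) :
  is_filter F -> strongly_homogeneous F.
Proof.
  intros HF U (HUF&HUo&HUc) (x0&Hx0).
  destruct (HUo x0 Hx0) as [n0 Hn0].
  set (A := Cyl F n0 x0).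
  assert (HAU : forall x, A x -> U x).
  { intros x [Hx Hp]. apply Hn0; auto. intros k Hk. symmetry. auto. }
  destruct (K F n0 x0 HF) as (af&ag&Ha).
  destruct (homeo_choice nat (fun _ => F) (P F) (fun k => K F (S k) _ HF)) as (cf&cg&Hc).
  set (V := fun x => U x /\ ~ pref n0 x0 x).
  set (W := fun x => F x /\ ~ V x).
  assert (Hnp : forall x y, agree n0 x y -> ~ pref n0 x0 x -> ~ pref n0 x0 y).
  { intros x y Hxy Hx Hy. apply Hx. eapply pref_agree; eauto. apply agree_sym; auto. }
  assert (HVo : open_in F V).
  { intros x [Hx Hp]. destruct (HUo x Hx) as [n1 Hn1]. exists (max n1 n0).
    intros y Hy Hxy. split.
    - apply Hn1; auto. apply (agree_le (max n1 n0)); auto; lia.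
    - apply (Hnp x); auto. apply (agree_le (max n1 n0)); auto; lia. }
  assert (HVoU : open_in U V).
  { intros x [Hx Hp]. exists n0. intros y Hy Hxy. split; auto. apply (Hnp x); auto. }
  assert (HWo : open_in F W).
  { intros x [Hx HnV]. destruct (classic (U x)) as [Hu|Hu].
    - assert (Hp : pref n0 x0 x) by (apply NNPP; intro; apply HnV; split; auto).
      exists n0. intros y Hy Hxy. split; auto. intros [_ Hn]. apply Hn.
      eapply pref_agree; eauto.
    - destruct (HUc x (conj Hx Hu)) as [n1 Hn1]. exists n1. intros y Hy Hxy.
      split; auto. intros [Hu' _]. destruct (Hn1 y Hy Hxy); auto. }
  assert (HAoU : open_in U A).
  { intros x [Hx Hp]. exists n0. intros y Hy Hxy. split; auto. eapply pref_agree; eauto. }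
  set (FW := fun k y => P F k y /\ W (cg k y)).
  set (FV := fun k y => P F k y /\ V (cg k y)).
  assert (HFWo : forall k, open_in F (FW k)).
  { intro k. apply (open_trans F (P F k)). apply cyl_open. intros x [Hx _]; auto.
    intros x [Hx _]; auto. apply (open_pre F (P F k) (cf k)); auto. }
  assert (HFVo : forall k, open_in F (FV k)).
  { intro k. apply (open_trans F (P F k)). apply cyl_open. intros x [Hx _]; auto.
    intros x [Hx _]; auto. apply (open_pre F (P F k) (cf k)); auto. }
  set (UP := fun (i : bool * nat) => match i with
             | (true, k) => fun x => A x /\ FW k (ag x)
             | (false, 0) => V
             | (false, S k) => fun x => A x /\ FV k (ag x) end).
  set (FP := fun (i : bool * nat) => match i with
             | (true, k) => FW k
             | (false, k) => FV k end).
  assert (HaA : forall x, A x -> F (ag x)) by (destruct Ha as (_&H&_); auto).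
  assert (HcP : forall k y, P F k y -> F (cg k y)) by (intro k; destruct (Hc k) as (_&H&_); auto).
  assert (HVA : forall x, V x -> A x -> False).
  { intros x [_ H1] [_ H2]. auto. }
  apply (glue (bool * nat) (true, 0) U F UP FP).
  - intros [[|] [|k]] x; simpl; intros H.
    + apply HAU, H.
    + apply HAU, H.
    + apply H.
    + apply HAU, H.
  - intros x Hx. destruct (classic (pref n0 x0 x)) as [Hp|Hp].
    + assert (HA : A x) by (split; auto).
      destruct (P_cover F (ag x) HF (HaA x HA)) as [k Hk].
      destruct (classic (V (cg k (ag x)))) as [Hv|Hv].
      * exists (false, S k). simpl. unfold FV. auto.
      * exists (true, k). simpl. unfold FW, W. split; auto.
    + exists (false, 0). simpl. split; auto.
  - intros [[|] [|k]] [[|] [|j]] x; simpl; unfold FW, FV, W;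
      intros H1 H2; try reflexivity;
      try (exfalso; apply (HVA x); [apply H1 || apply H2 | apply H1 || apply H2]; fail);
      try (pose proof (P_disj F _ _ _ (proj1 (proj2 H1)) (proj1 (proj2 H2)));
           repeat match goal with H: S _ = S _ |- _ => injection H as H end;
           try lia; subst; try reflexivity; exfalso; tauto).
  - intros [[|] [|k]]; simpl.
    + apply (open_trans U A); auto. intros x [Hx _]; auto.
      apply (open_pre F A af); auto.
    + apply (open_trans U A); auto. intros x [Hx _]; auto.
      apply (open_pre F A af); auto.
    + auto.
    + apply (open_trans U A); auto. intros x [Hx _]; auto.
      apply (open_pre F A af); auto.
  - intros [[|] k] y; simpl; intros [[H _] _]; auto.
  - intros y Hy. destruct (P_cover F y HF Hy) as [k Hk].
    destruct (classic (V (cg k y))) as [Hv|Hv].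
    + exists (false, k). simpl. split; auto.
    + exists (true, k). simpl. split; auto. split; auto.
  - intros [[|] k] [[|] j] y; simpl; unfold FW, FV, W; intros [H1 H1'] [H2 H2'];
      pose proof (P_disj F _ _ _ H1 H2); subst; try reflexivity; exfalso; tauto.
  - intros [[|] k]; simpl; auto.
  - assert (HVF : forall x, V x -> F x) by (intros x [Hx _]; auto).
    assert (HFV : forall k, homeomorphic V (FV k)).
    { intro k. exists (cf k), (cg k). apply (homeo_restr F); auto. }
    assert (HFA : forall (Z : cantor -> Prop), (forall x, Z x -> F x) ->
               homeomorphic Z (fun x => A x /\ Z (ag x))).
    { intros Z HZ. exists af, ag. apply (homeo_restr F); auto. }
    intros [[|] [|k]]; simpl.
    + apply hsym. apply HFA. intros y [[Hy _] _]; auto.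
    + apply hsym. apply HFA. intros y [[Hy _] _]; auto.
    + apply HFV.
    + apply (htrans _ (FV k)). apply hsym, HFA. intros y [[Hy _] _]; auto.
      apply (htrans _ V). apply hsym, HFV. apply HFV.
Qed.
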